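(* Let $(X,d^\star)$ be a $\star$-metric space, $\{x_n\}_{n\in\mathbb{N}}$ a sequence in $X$ and $x_0\in X$. Then $\{x_n\}$ converges to $x_0$ in the topological space $(X,\mathscr{T}_{d^\star})$ if and only if $\{x_n\}$ converges to $x_0$ under $d^\star$, i.e. for every $\epsilon>0$ there is $k\in\mathbb{N}$ with $d^\star(x_0,x_n)<\epsilon$ for all $n\ge k$.
   Context: A $t$-definer is a function $\star:[0,\infty)\times[0,\infty)\to[0,\infty)$ such that for all $a,b,c\ge 0$: $a\star b=b\star a$; $a\star(b\star c)=(a\star b)\star c$; if $a\le b$ then $a\star c\le b\star c$; $a\star 0=a$; and $\star$ is continuous in its first variable with respect to the Euclidean topology. Given a nonempty set $X$ and a $t$-definer $\star$, a $\star$-metric on $X$ is a function $d^\star:X\times X\to[0,\infty)$ such that for all $x,y,z\in X$: $d^\star(x,y)=0$ iff $x=y$; $d^\star(x,y)=d^\star(y,x)$; and $d^\star(x,y)\le d^\star(x,z)\star d^\star(z,y)$. Put $B_{d^\star}(a,r)=\{x\in X: d^\star(a,x)<r\}$ and let $\mathscr{T}_{d^\star}$ be the topology consisting of all $U\subseteq X$ such that for each $a\in U$ some $B_{d^\star}(a,r)$, $r>0$, is contained in $U$. *)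

(* Defs.v *)
From Stdlib Require Import Reals.
Open Scope R_scope.

(* A t-definer: a binary operation on [0,oo), represented as a function
   R -> R -> R whose axioms are required on nonnegative arguments only. *)
Definition t_definer (star : R -> R -> R) : Prop :=
  (forall a b, 0 <= a -> 0 <= b -> 0 <= star a b) /\
  (forall a b, 0 <= a -> 0 <= b -> star a b = star b a) /\
  (forall a b c, 0 <= a -> 0 <= b -> 0 <= c ->
     star a (star b c) = star (star a b) c) /\
  (forall a b c, 0 <= a -> 0 <= b -> 0 <= c -> a <= b -> star a c <= star b c) /\
  (forall a, 0 <= a -> star a 0 = a) /\
  (forall b a, 0 <= b -> 0 <= a ->
     forall eps, 0 < eps -> exists delta, 0 < delta /\
       forall a', 0 <= a' -> Rabs (a' - a) < delta ->
         Rabs (star a' b - star a b) < eps).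

Definition star_metric {X : Type} (star : R -> R -> R) (d : X -> X -> R) : Prop :=
  (forall x y, 0 <= d x y) /\
  (forall x y, d x y = 0 <-> x = y) /\
  (forall x y, d x y = d y x) /\
  (forall x y z, d x y <= star (d x z) (d z y)).

Definition ball_star {X : Type} (d : X -> X -> R) (a : X) (r : R) : X -> Prop :=
  fun x => d a x < r.

Definition open_star {X : Type} (d : X -> X -> R) (U : X -> Prop) : Prop :=
  forall a, U a -> exists r, 0 < r /\ forall x, ball_star d a r x -> U x.

Definition top_converges {X : Type} (d : X -> X -> R) (x : nat -> X) (x0 : X) : Prop :=
  forall U, open_star d U -> U x0 -> exists k, forall n, (k <= n)%nat -> U (x n).

Definition metric_converges {X : Type} (d : X -> X -> R) (x : nat -> X) (x0 : X) : Prop :=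
  forall eps, 0 < eps -> exists k, forall n, (k <= n)%nat -> d x0 (x n) < eps.

(* Main.v *)
Require Import Defs.
From Stdlib Require Import Reals Lra.
Open Scope R_scope.

Theorem proposition4p2 (X : Type) (star : R -> R -> R) (d : X -> X -> R)
  (Hstar : t_definer star) (Hd : star_metric star d)
  (x : nat -> X) (x0 : X) :
  top_converges d x x0 <-> metric_converges d x x0.
Proof.
  destruct Hstar as [Hnn [Hcom [Has [Hmon [H0 Hcont]]]]].
  destruct Hd as [Dnn [Deq [Dsym Dtri]]].
  split.
  - intros Ht eps Heps.
    apply (Ht (ball_star d x0 eps)).
    + intros a Ha. unfold ball_star in Ha.
      destruct (Hcont (d x0 a) 0 (Dnn _ _) (Rle_refl 0) (eps - d x0 a)) as [dl [Hdl Hc]].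
      { lra. }
      exists dl. split; [exact Hdl|].
      intros y Hy. unfold ball_star in *.
      pose proof (Dtri x0 y a) as T.
      rewrite Hcom in T by apply Dnn.
      specialize (Hc (d a y) (Dnn _ _)).
      rewrite (Hcom 0) in Hc by (apply Dnn || lra).
      rewrite H0 in Hc by apply Dnn.
      assert (Rabs (d a y - 0) < dl).
      { rewrite Rminus_0_r, Rabs_right; [exact Hy| apply Rle_ge, Dnn]. }
      specialize (Hc H).
      apply Rabs_def2 in Hc. lra.
    + unfold ball_star. rewrite (proj2 (Deq x0 x0) eq_refl). exact Heps.
  - intros Hm U HU Hx0.
    destruct (HU x0 Hx0) as [r [Hr Hb]].
    destruct (Hm r Hr) as [k Hk].
    exists k. intros n Hn. apply Hb. apply Hk, Hn.
Qed.
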